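(* For any probability measure $G$ on $[0,\infty)$ there exists $\theta>0$ such that for all $x_1,x_2,y_1,y_2\in\mathbb Z$, with $T=T((x_1,y_1),(x_2,y_2))$, we have $\mathbb E[e^{\theta T}]<\infty$.
   Context: Model: In $\mathbb Z^2$, every vertical edge receives the deterministic weight $1$ and every horizontal edge (joining $(x,y)$ and $(x+1,y)$) receives a random weight, independently with law $G$. The passage time of a nearest-neighbour path is the sum of the weights of its edges, and $T(u,w)$ is the infimum of passage times over paths from $u$ to $w$. *)

(* Defs.v *)
From HB Require Import structures.
From mathcomp Require Import all_boot all_order all_algebra.
From mathcomp Require Import all_classical all_reals all_analysis.
Set Implicit Arguments. Unset Strict Implicit. Unset Printing Implicit Defensive.
Import Order.TTheory GRing.Theory Num.Theory.
Import numFieldNormedType.Exports.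
Local Open Scope classical_set_scope.
Local Open Scope ring_scope.

Definition vertex := (int * int)%type.

Definition adj : rel vertex := fun a b =>
  ((a.1 == b.1) && (`|a.2 - b.2| == 1%N)) || ((a.2 == b.2) && (`|a.1 - b.1| == 1%N)).

(* Weight of the edge {a,b} (a, b adjacent): vertical edges have weight 1,
   the horizontal edge joining (x,y) and (x+1,y) has weight w (x,y),
   i.e. horizontal edges are indexed by their left endpoint. *)
Definition edge_weight (R : realType) (w : vertex -> R) (a b : vertex) : R :=
  if a.1 == b.1 then 1 else w (Order.min a.1 b.1, a.2).

Definition nn_path (u v : vertex) (s : seq vertex) : bool :=
  path adj u s && (last u s == v).

Definition passage_time (R : realType) (w : vertex -> R) (u : vertex)
  (s : seq vertex) : R :=
  \sum_(e <- zip (u :: s) s) edge_weight w e.1 e.2.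

Definition fpp_time (R : realType) (w : vertex -> R) (u v : vertex) : R :=
  inf [set passage_time w u s | s in [set s | nn_path u v s]].

Definition mutually_independent (d : measure_display) (Omega : measurableType d)
  (R : realType) (P : probability Omega R) (I : eqType) (X : I -> Omega -> R) :=
  forall (J : seq I) (A : I -> set R),
    uniq J -> (forall i, measurable (A i)) ->
    P (\big[setI/setT]_(i <- J) (X i @^-1` A i)) =
    (\prod_(i <- J) P (X i @^-1` A i))%E.

(* Main.v *)
Require Import Defs.
From HB Require Import structures.
From mathcomp Require Import all_boot all_order all_algebra.
From mathcomp Require Import all_classical all_reals all_analysis.
From mathcomp Require Import measurable_realfun.
From mathcomp Require Import zify ring lra.
Import Order.TTheory GRing.Theory Num.Theory.
Import numFieldNormedType.Exports.
Local Open Scope classical_set_scope.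
Local Open Scope ring_scope.

Set Implicit Arguments. Unset Strict Implicit. Unset Printing Implicit Defensive.


Section Det.
Variables (R : realType) (w : vertex -> R).

Definition reach (u v : vertex) (c : R) :=
  exists s, nn_path u v s /\ passage_time w u s <= c.

Lemma zip_cat_path (u : vertex) s1 s2 :
  zip (u :: s1 ++ s2) (s1 ++ s2) = zip (u :: s1) s1 ++ zip (last u s1 :: s2) s2.
Proof. by elim: s1 u => [|x s1 IH] u //=; rewrite IH. Qed.

Lemma reach_refl u : reach u u 0.
Proof. exists [::]; rewrite /nn_path /passage_time /= big_nil eqxx; split => //. Qed.

Lemma reach_step u v : adj u v -> reach u v (edge_weight w u v).
Proof.
move=> huv; exists [:: v]; rewrite /nn_path /passage_time /= huv eqxx big_seq1.
by split.
Qed.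

Lemma reach_trans u v z c1 c2 : reach u v c1 -> reach v z c2 -> reach u z (c1 + c2).
Proof.
move=> [s1 [/andP[p1 /eqP l1] h1]] [s2 [/andP[p2 /eqP l2] h2]].
exists (s1 ++ s2); split.
  by rewrite /nn_path cat_path p1 l1 p2 last_cat l1 l2 /=.
by rewrite /passage_time zip_cat_path big_cat /= l1 lerD.
Qed.

Lemma reach_mono u v c c' : c <= c' -> reach u v c -> reach u v c'.
Proof. by move=> cc [s [p h]]; exists s; split => //; apply: le_trans cc. Qed.

Lemma reach_step_le u v c : edge_weight w u v <= c -> adj u v -> reach u v c.
Proof. by move=> h a; apply: reach_mono h (reach_step a). Qed.

Lemma reach_up (x y : int) (k : nat) : reach (x, y) (x, y + k%:Z) k%:R.
Proof.
elim: k => [|k IH]; first by rewrite addr0; apply: reach_refl.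
rewrite -addn1 natrD; apply: reach_trans IH _.
apply: reach_step_le; first by rewrite /edge_weight /= eqxx.
 rewrite /adj /= eqxx /=; apply/orP; left; apply/eqP; lia.
Qed.

Lemma reach_down (x y : int) (k : nat) : reach (x, y + k%:Z) (x, y) k%:R.
Proof.
elim: k => [|k IH]; first by rewrite addr0; apply: reach_refl.
rewrite -addn1 natrD [_ + 1]addrC; apply: reach_trans _ IH.
apply: reach_step_le; first by rewrite /edge_weight /= eqxx.
 rewrite /adj /= eqxx /=; apply/orP; left; apply/eqP; lia.
Qed.

Lemma reach_vert (x y y' : int) : reach (x, y) (x, y') (`|y' - y|%N)%:R.
Proof.
set k := `|y' - y|%N.
case: (lerP y y') => hy.
  have e : y + k%:Z = y' by rewrite /k; lia.
  by have := reach_up x y k; rewrite e.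
have e : y' + k%:Z = y by rewrite /k; lia.
by have := reach_down x y' k; rewrite e.
Qed.

Lemma reach_right (x y : int) (a : R) (k : nat) :
  (forall i : nat, (i < k)%N -> w (x + i%:Z, y) <= a) ->
  reach (x, y) (x + k%:Z, y) (k%:R * a) /\ reach (x + k%:Z, y) (x, y) (k%:R * a).
Proof.
elim: k => [|k IH] H.
  by rewrite addr0 mul0r; split; apply: reach_refl.
have [IH1 IH2] := IH (fun i hi => H i (ltnW hi)).
have hk := H k (ltnSn k).
rewrite -addn1 natrD mulrDl mul1r; split.
  apply: reach_trans IH1 _; apply: reach_step_le.
    rewrite /edge_weight /=.
    have -> : (x + k%:Z == x + (k + 1)%N%:Z) = false by lia.
    by rewrite (_ : Order.min _ _ = x + k%:Z) //; apply/min_idPl; lia.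
  rewrite /adj /=; apply/orP; right; rewrite eqxx /=; apply/eqP; lia.
rewrite [_ + a]addrC; apply: reach_trans IH2; apply: reach_step_le.
  rewrite /edge_weight /=.
  have -> : (x + (k + 1)%N%:Z == x + k%:Z) = false by lia.
  by rewrite (_ : Order.min _ _ = x + k%:Z) //; apply/min_idPr; lia.
rewrite /adj /=; apply/orP; right; rewrite eqxx /=; apply/eqP; lia.
Qed.

Lemma reach_fpp u v c : reach u v c -> 0 <= c -> fpp_time w u v <= c.
Proof.
move=> [s [ps hs]] c0; rewrite /fpp_time.
set S := [set _ | _ in _].
case: (pselect (has_lbound S)) => hS.
  apply: le_trans hs; apply: ge_inf => //; by exists s.
rewrite inf_out //; by case.
Qed.

Lemma fpp_good (x1 x2 y1 y2 : int) (a : R) (k : nat) : 0 <= a ->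
  (forall i : nat, (i < `|x2 - x1|%N)%N -> w (Order.min x1 x2 + i%:Z, y1 + k%:Z) <= a) ->
  fpp_time w (x1, y1) (x2, y2) <=
    2 * k%:R + (`|y2 - y1|%N)%:R + (`|x2 - x1|%N)%:R * a.
Proof.
move=> a0 H.
set n := `|x2 - x1|%N; set m := `|y2 - y1|%N.
have hor : reach (x1, y1 + k%:Z) (x2, y1 + k%:Z) (n%:R * a).
  case: (lerP x1 x2) => hx.
    have em : Order.min x1 x2 = x1 by apply/min_idPl.
    rewrite em in H.
    have e : x1 + n%:Z = x2 by rewrite /n; lia.
    by have := (reach_right H).1; rewrite e.
  have em : Order.min x1 x2 = x2 by apply/min_idPr; lia.
  rewrite em in H.
  have e : x2 + n%:Z = x1 by rewrite /n; lia.
  by have := (reach_right H).2; rewrite e.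
apply: reach_fpp; last first.
  by apply: addr_ge0; [apply: addr_ge0; [apply: mulr_ge0|]|apply: mulr_ge0].
have := reach_trans (@reach_up x1 y1 k) (reach_trans hor (@reach_vert x2 (y1 + k%:Z) y2)).
apply: reach_mono.
have : ((`|y2 - (y1 + k%:Z)%R|%N)%:R <= k%:R + m%:R :> R).
  rewrite -natrD ler_nat /m; lia.
lra.
Qed.

End Det.



Lemma tail_small (R : realType) (G : probability R R) (eps : R) : 0 < eps ->
  exists a : R, 0 <= a /\ (G `]a, +oo[%classic <= eps%:E)%E.
Proof.
move=> e0.
pose F (k : nat) := `]k%:R, +oo[%classic : set R.
have mF k : measurable (F k) by exact: measurable_itv.
have cv := @nonincreasing_cvg_mu _ _ _ G F.
have F0 : (G (F 0%N) < +oo)%E.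
  by apply: (le_lt_trans (probability_le1 G (mF 0%N))); rewrite ltey.
have capE : \bigcap_n F n = set0.
  apply/seteqP; split => // x /= Hx.
  have := Hx (Num.bound `|x|) I; rewrite /F /= in_itv /= andbT.
  have := archi_boundP (normr_ge0 x); have := ler_norm x; lra.
have ni : nonincreasing_seq F.
  move=> i j ij; apply/subsetPset => x; rewrite /F /= !in_itv /= !andbT.
  have : (i%:R <= j%:R :> R) by rewrite ler_nat.
  lra.
have := cv F0 mF (bigcapT_measurable mF) ni; rewrite capE measure0 => H.
apply: contrapT => /forallNP Hn.
have : (eps%:E <= 0)%E.
  apply: (cvge_to_ge H); apply: nearW => k /=.
  have := Hn k%:R; rewrite ler0n => /not_andP [//|/negP].
  by rewrite -ltNge => /ltW.
by rewrite lee_fin; lra.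
Qed.



Lemma my_le_integral d (T : measurableType d) (R : realType)
  (mu : {measure set T -> \bar R}) (f g : T -> \bar R) :
  (forall x, (0 <= f x)%E) -> (forall x, (f x <= g x)%E) ->
  (\int[mu]_(x in setT) f x <= \int[mu]_(x in setT) g x)%E.
Proof.
move=> f0 fg.
have g0 x : (0 <= g x)%E by apply: le_trans (fg x).
rewrite (ge0_integralTE _ f0) (ge0_integralTE _ g0).
apply: ge_ereal_sup => _ [h /= hf <-]; apply: ereal_sup_ubound; exists h => //=.
by move=> x; apply: le_trans (fg x).
Qed.



Lemma bigI_measurable d (T : measurableType d) (I : Type) (s : seq I) (F : I -> set T) :
  (forall i, measurable (F i)) -> measurable (\big[setI/setT]_(i <- s) F i).
Proof.
move=> mF; elim: s => [|i s IH]; first by rewrite big_nil.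
by rewrite big_cons; apply: measurableI.
Qed.

Lemma bigU_measurable d (T : measurableType d) (n : nat) (F : nat -> set T) :
  (forall i, measurable (F i)) -> measurable (\big[setU/set0]_(i < n) F i).
Proof.
move=> mF; elim: n => [|n IH]; first by rewrite big_ord0.
by rewrite big_ord_recr; apply: measurableU.
Qed.

Lemma in_bigI (T : Type) (I : eqType) (s : seq I) (F : I -> set T) x :
  (forall i, i \in s -> F i x) -> (\big[setI/setT]_(i <- s) F i) x.
Proof.
elim: s => [|i s IH] H; first by rewrite big_nil.
rewrite big_cons; split; first by apply: H; rewrite mem_head.
by apply: IH => j js; apply: H; rewrite inE js orbT.
Qed.

Section Prob.
Variables (R : realType) (G : probability R R).
Variables (d : measure_display) (Omega : measurableType d) (P : probability Omega R)
  (w : vertex -> Omega -> R).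
Hypothesis mw : forall e, measurable_fun setT (w e).
Hypothesis law : forall e (A : set R), measurable A -> P (w e @^-1` A) = G A.
Hypothesis indep : mutually_independent P w.
Variables (a : R) (n : nat) (x0 : int).

Definition ppre (e : vertex) := w e @^-1` `]a, +oo[%classic.
Definition tailp := fine (G `]a, +oo[%classic).
Definition badrow (y : int) := \big[setU/set0]_(k < n) ppre (x0 + (k : nat)%:Z, y).

Lemma mpre e : measurable (ppre e).
Proof. by have := mw e measurableT (measurable_itv `]a, +oo[); rewrite setTI. Qed.

Lemma Ppre e : P (ppre e) = tailp%:E.
Proof.
rewrite /ppre law; last exact: measurable_itv.
by rewrite /tailp fineK //; apply: fin_num_measure; exact: measurable_itv.
Qed.

Lemma tt_ge0 : 0 <= tailp.
Proof. by rewrite /tailp fine_ge0 // measure_ge0. Qed.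

Lemma mbad y : measurable (badrow y).
Proof. by apply: (@bigU_measurable _ _ n (fun k : nat => ppre (x0 + k%:Z, y))) => i; apply: mpre. Qed.

Lemma indepE (E : seq vertex) : uniq E ->
  P (\big[setI/setT]_(e <- E) ppre e) = (tailp ^+ size E)%:E.
Proof.
move=> uE; rewrite /ppre (@indep E (fun _ => `]a, +oo[%classic) uE); last first.
  by move=> _; exact: measurable_itv.
elim: E {uE} => [|e E IH]; first by rewrite big_nil.
by rewrite big_cons IH -/(ppre e) Ppre /= exprS EFinM.
Qed.

Lemma key_bound (ks : seq int) (E : seq vertex) : uniq ks -> uniq E ->
  (forall e, e \in E -> e.2 \notin ks) ->
  (P (\big[setI/setT]_(e <- E) ppre e `&` \big[setI/setT]_(y <- ks) badrow y)
    <= ((tailp ^+ size E) * (n%:R * tailp) ^+ size ks)%:E)%E.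
Proof.
elim: ks E => [|y ks IH] E uks uE HE.
  by rewrite big_nil setIT indepE // expr0 mulr1.
pose F (k : nat) := \big[setI/setT]_(e <- (x0 + k%:Z, y) :: E) ppre e `&`
                    \big[setI/setT]_(y' <- ks) badrow y'.
have mF k : measurable (F k).
  by apply: measurableI; apply: bigI_measurable => i; [apply: mpre|apply: mbad].
have sub : \big[setI/setT]_(e <- E) ppre e `&` \big[setI/setT]_(y' <- y :: ks) badrow y'
    `<=` \big[setU/set0]_(k < n) F k.
  rewrite -bigcup_mkord => om [hE]; rewrite big_cons => -[hb hks].
  move: hb; rewrite /badrow -(bigcup_mkord n (fun k : nat => ppre (x0 + k%:Z, y))) => -[k kn hk]; exists k => //.
  by rewrite /F big_cons.
have ms : measurable (\big[setI/setT]_(e <- E) ppre e `&`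
    \big[setI/setT]_(y' <- y :: ks) badrow y').
  by apply: measurableI; apply: bigI_measurable => i; [apply: mpre|apply: mbad].
apply: le_trans (@content_subadditive _ _ _ P _ F n (fun k _ => mF k) ms sub) _.
move: uks => /= /andP [yks uks].
have bnd k : (P (F k) <= ((tailp ^+ (size E).+1) * (n%:R * tailp) ^+ size ks)%:E)%E.
  apply: (IH ((x0 + k%:Z, y) :: E)) => //=.
    rewrite uE andbT; apply/negP => /HE /=; by rewrite inE eqxx.
  move=> e; rewrite inE => /orP [/eqP -> //|eE].
  by have := HE e eE; rewrite inE negb_or => /andP [].
apply: (@le_trans _ _ (\sum_(k < n) ((tailp ^+ (size E).+1 * (n%:R * tailp) ^+ size ks)%:E))%E); first by apply: lee_sum => k _; exact: bnd.
rewrite sumEFin lee_fin sumr_const card_ord /= !exprS.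
rewrite le_eqVlt; apply/orP; left; apply/eqP; rewrite -mulr_natr; ring.
Qed.

End Prob.
Lemma geo_sum (R : realType) (r : R) :
  (\sum_(j <oo) (r / (2 ^ (j + 1))%:R)%:E)%E = r%:E.
Proof.
have := @cvg_geometric_eseries_half R r 0; rewrite expr0 divr1.
move/cvg_lim => <- //.
Qed.

Unset Implicit Arguments.

Theorem corollary3p3 (R : realType) (G : probability R R) :
  G [set x : R | 0 <= x] = 1%E ->
  exists theta : R, 0 < theta /\
    forall (d : measure_display) (Omega : measurableType d)
           (P : probability Omega R) (w : vertex -> Omega -> R),
      (forall e, measurable_fun setT (w e)) ->
      (forall e (A : set R), measurable A -> P (w e @^-1` A) = G A) ->
      mutually_independent P w ->
      forall x1 x2 y1 y2 : int,
        (\int[P]_(om in setT)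
           (expR (theta * fpp_time (fun e => w e om) (x1, y1) (x2, y2)))%:E
         < +oo)%E.
Proof.
move=> _; exists (ln 2 / 2); split.
  by apply: divr_gt0 => //; apply: ln_gt0; rewrite ltr1n.
move=> d Omega P w mw law indep x1 x2 y1 y2.
set n := `|x2 - x1|%N; set m := `|y2 - y1|%N; set x0 := Order.min x1 x2.
set eps := (4 * (n + 1)%:R)^-1 : R.
have eps0 : 0 < eps by rewrite /eps invr_gt0 mulr_gt0 // ltr0n addn1.
have [a [a0 ha]] := tail_small G eps0.
set t := tailp G a.
have t0 : 0 <= t := tt_ge0 G a.
have te : t <= eps.
  move: ha; rewrite -lee_fin /t /tailp fineK //; apply: fin_num_measure.
  exact: measurable_itv.
have nt : n%:R * t <= 4^-1.
  have h : (n%:R + 1) * eps = 4^-1.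
    by rewrite /eps natrD; field; by rewrite natr1 pnatr_eq0.
  have : 0 <= n%:R :> R by [].
  nra.
set C := expR (ln 2 / 2 * (m%:R + n%:R * a)).
have C1 : 1 <= C.
  rewrite /C; apply: (le_trans _ (expR_ge1Dx _)).
  have : 0 <= ln 2 / 2 * (m%:R + n%:R * a) :> R.
    apply: mulr_ge0; first by apply: divr_ge0 => //; apply: ln_ge0; lra.
    by apply: addr_ge0 => //; apply: mulr_ge0.
  lra.
have e2 : expR (ln 2) = 2 :> R by rewrite lnK // posrE.
pose rows j := [seq y1 + (k%:Z) | k <- iota 0 j].
pose B j := \big[setI/setT]_(y <- rows j) badrow w a n x0 y.
have mB j : measurable (B j).
  by apply: bigI_measurable => y; apply: mbad.
pose f : nat -> Omega -> \bar R := fun j om => ((C * 2 ^+ j) * \1_(B j) om)%:E.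
have f0 j om : (0 <= f j om)%E.
  rewrite lee_fin; apply: mulr_ge0; last by rewrite indicE.  
  by apply: mulr_ge0; [lra|apply: exprn_ge0].
have mf j : measurable_fun setT (f j).
  have -> : f j = EFin \o (fun om => C * 2 ^+ j * \1_(B j) om) by [].
  apply/measurable_EFinP; apply: measurable_funM; first exact: measurable_cst.
  exact: measurable_indic.
have allbad (j : nat) om : (forall k, (k < j)%N -> ~ (forall i : nat, (i < n)%N ->
    w (x0 + i%:Z, y1 + k%:Z) om <= a)) -> B j om.
  move=> H; apply: in_bigI => y /mapP [k]; rewrite mem_iota add0n => /andP [_ kj] ->.
  have /existsNP [i /not_implyP [iN wi]] := H k kj.
  rewrite /badrow -(bigcup_mkord n (fun k0 : nat => ppre w a (x0 + k0%:Z, y1 + k%:Z))).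
  exists i => //; rewrite /ppre /= in_itv /= andbT ltNge; exact/negP.
have pw om : ((expR (ln 2 / 2 * fpp_time (fun e => w e om) (x1, y1) (x2, y2)))%:E
    <= \sum_(j <oo) f j om)%E.
  have [j [Bj hj]] : exists j, B j om /\
      expR (ln 2 / 2 * fpp_time (fun e => w e om) (x1, y1) (x2, y2)) <= C * 2 ^+ j.
    set T0 := fpp_time (fun e => w e om) (x1, y1) (x2, y2).
    case: (pselect (exists k : nat, forall i : nat, (i < n)%N ->
       w (x0 + i%:Z, y1 + k%:Z) om <= a)) => [hex|hno].
      have hex' : exists k : nat, `[< forall i : nat, (i < n)%N ->
          w (x0 + i%:Z, y1 + k%:Z) om <= a >].
        by case: hex => k hk; exists k; apply/asboolP.
      case: (ex_minnP hex') => k /asboolP gk kmin.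
      exists k; split.
        apply: allbad => k' k'k gk'.
        by have := kmin k' (asboolT gk'); rewrite leqNgt k'k.
      have hT := @fpp_good R (fun e => w e om) x1 x2 y1 y2 a k a0 gk.
      have e2k : 2 ^+ k = expR (k%:R * ln 2) :> R by rewrite expRM_natl e2.
      rewrite e2k /C -expRD ler_expR.
      have -> : ln 2 / 2 * (m%:R + n%:R * a) + k%:R * ln 2 =
          ln 2 / 2 * (2 * k%:R + m%:R + n%:R * a) :> R by field.
      apply: ler_wpM2l => //.
      by apply: divr_ge0 => //; apply: ln_ge0; lra.
    set e := expR _.
    exists (Num.bound e); split.
      by apply: allbad => k _ gk; apply: hno; exists k.
    have h1 := archi_boundP (expR_ge0 (ln 2 / 2 * T0)).
    have h2 : (Num.bound e)%:R <= 2 ^+ Num.bound e :> R.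
      by rewrite -natrX ler_nat; apply: ltnW; apply: ltn_expl.
    have h3 : 0 <= 2 ^+ Num.bound e :> R by apply: exprn_ge0.
    rewrite -/e in h1.
    apply: (le_trans (ltW h1)); apply: (le_trans h2).
    by rewrite -[X in X <= _]mul1r; apply: ler_wpM2r.
  apply: le_trans (nneseries_lim_ge j.+1 (fun k _ _ => f0 k om)).
  rewrite big_nat_recr //= -[X in (X <= _)%E]add0e; apply: leeD.
    by apply: sume_ge0 => k _; apply: f0.
  by rewrite /f indicE mem_set // mulr1 lee_fin.
apply: (le_lt_trans (my_le_integral P _ pw)).
  by move=> om; rewrite lee_fin expR_ge0.
rewrite integral_nneseries //.
apply: (le_lt_trans (lee_nneseries (v := fun j => ((2 * C) / (2 ^ (j + 1))%:R)%:E) _ _)).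
- by move=> j _ _; apply: integral_ge0 => om _; apply: f0.
- move=> j _.
  have -> : (\int[P]_(x in setT) f j x = (C * 2 ^+ j)%:E * P (B j))%E.
    rewrite /f; under eq_integral do rewrite EFinM.
    rewrite ge0_integralZl_EFin //; try (by rewrite integral_indic // setIT);
      try (by apply/measurable_EFinP; apply: measurable_indic).
    by apply: mulr_ge0; [lra|apply: exprn_ge0].
  have hP : (P (B j) <= ((n%:R * t) ^+ j)%:E)%E.
    have := @key_bound R G d Omega P w mw law indep a n x0 (rows j) [::].
    rewrite big_nil setTI expr0 mul1r size_map size_iota; apply => //.
    rewrite map_inj_uniq ?iota_uniq // => p q /addrI [] //.
  apply: (@le_trans _ _ ((C * 2 ^+ j)%:E * ((n%:R * t) ^+ j)%:E)%E).
    apply: lee_wpmul2l => //.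
    by rewrite lee_fin; apply: mulr_ge0; [lra|apply: exprn_ge0].
  rewrite -EFinM lee_fin.
  have h4 : (n%:R * t) ^+ j <= (4^-1) ^+ j.
    by apply: lerXn2r => //; rewrite nnegrE //; apply: mulr_ge0.
  have -> : 2 * C / (2 ^ (j + 1))%:R = C * 2 ^+ j * (4^-1) ^+ j.
    have four : 4 = 2 * 2 :> R by ring.
    rewrite natrX addn1 exprSr exprVn four exprMn.
    by field; rewrite expf_neq0.
  apply: ler_wpM2l => //.
  by apply: mulr_ge0; [lra|apply: exprn_ge0].
by rewrite geo_sum ltry.
Qed.
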